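(* Let $\mathcal{M}$ be the set of compactly supported probability distributions on $\mathbb{R}$ and $\rho:\mathcal{M}\to\mathbb{R}$. Then $\{u\circ\rho: u\in\mathcal{F}_U\}=\{\rho\circ T^u: u\in\mathcal{F}_U\}$ if and only if there exist a strictly monotone, continuous, surjective $h:\mathbb{R}\to\mathbb{R}$ and a quantile $\widehat\rho:\mathcal{M}\to\mathbb{R}$ such that $\rho=h\circ\widehat\rho$.
   Context: $\mathcal{F}_U$ is the set of increasing (non-decreasing) continuous functions $u:\mathbb{R}\to\mathbb{R}$; $T^u(F)$ is the distribution of $u(X)$ when $X\sim F$. For a cdf $F$, $F_L^{-1}(t)=\inf\{x:F(x)\ge t\}$ for $t\in(0,1]$ and $F_R^{-1}(t)=\inf\{x:F(x)>t\}$ for $t\in[0,1)$. A map $\widehat\rho:\mathcal{M}\to\mathbb{R}$ is a quantile if either there is $p\in(0,1]$ with $\widehat\rho(F)=F_L^{-1}(p)$ for all $F$, or there is $p\in[0,1)$ with $\widehat\rho(F)=F_R^{-1}(p)$ for all $F$. *)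

(* Defs.v *)
From HB Require Import structures.
From mathcomp Require Import all_boot all_order all_algebra.
From mathcomp Require Import all_classical all_reals.
From mathcomp Require Import topology normedtype.
Set Implicit Arguments. Unset Strict Implicit. Unset Printing Implicit Defensive.
Import Order.TTheory GRing.Theory Num.Theory.
Import numFieldNormedType.Exports.
Local Open Scope classical_set_scope.
Local Open Scope ring_scope.

(* A distribution on R is represented by its cdf F : R -> R.
   isM F : F is the cdf of a compactly supported probability distribution:
   nondecreasing, right-continuous, F = 0 left of some a, F = 1 right of some b. *)
Definition isM (R : realType) (F : R -> R) : Prop :=
  {homo F : x y / x <= y} /\
  (forall x : R, F @ x^'+ --> F x) /\
  (exists a b : R, (forall x, x < a -> F x = 0) /\ (forall x, b <= x -> F x = 1)).

Definition inFU (R : realType) (u : R -> R) : Prop :=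
  {homo u : x y / x <= y} /\ continuous u.

(* T^u(F) : cdf of u(X) for X ~ F, i.e. y |-> P(u(X) <= y) = F-mass of
   {x | u x <= y}; for u non-decreasing continuous this set is empty, R, or
   (-oo, a], so its mass is sup ({0} U {F x | u x <= y}). *)
Definition Tu (R : realType) (u : R -> R) (F : R -> R) : R -> R :=
  fun y => sup ([set 0] `|` [set F x | x in [set x | u x <= y]]).

Definition qL (R : realType) (F : R -> R) (t : R) : R := inf [set x | t <= F x].
Definition qR (R : realType) (F : R -> R) (t : R) : R := inf [set x | t < F x].

Definition is_quantile (R : realType) (rh : (R -> R) -> R) : Prop :=
  (exists p : R, 0 < p <= 1 /\ forall F, isM F -> rh F = qL F p) \/
  (exists p : R, 0 <= p < 1 /\ forall F, isM F -> rh F = qR F p).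

Definition strictly_monotone (R : realType) (h : R -> R) : Prop :=
  (forall x y, x < y -> h x < h y) \/ (forall x y, x < y -> h y < h x).

Definition comp_sets_equal (R : realType) (rho : (R -> R) -> R) : Prop :=
  (forall u, inFU u -> exists v, inFU v /\ forall F, isM F -> u (rho F) = rho (Tu v F)) /\
  (forall v, inFU v -> exists u, inFU u /\ forall F, isM F -> rho (Tu v F) = u (rho F)).

(* Main.v *)
Require Import Defs.
From HB Require Import structures.
From mathcomp Require Import all_boot all_order all_algebra.
From mathcomp Require Import all_classical all_reals.
From mathcomp Require Import topology normedtype.
Set Implicit Arguments. Unset Strict Implicit. Unset Printing Implicit Defensive.
Import Order.TTheory GRing.Theory Num.Theory.
Import numFieldNormedType.Exports.
Local Open Scope classical_set_scope.
Local Open Scope ring_scope.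
From mathcomp Require Import lra.

Section S.
Variable R : realType.
Implicit Types (G f : R -> R) (x : R).

Definition RC G x := forall e : R, 0 < e -> exists2 d : R, 0 < d &
  forall y, x < y -> y < x + d -> `|G y - G x| < e.

Lemma RC_cvg G x : RC G x -> G @ x^'+ --> G x.
Proof.
move=> H; apply/cvgrPdist_lt => e e0.
have [d d0 Hd] := H e e0.
rewrite near_withinE; exists d => //= t /= xt tx.
rewrite distrC; apply: Hd => //.
move: xt; rewrite ltr_norml; lra.
Qed.

Lemma cvg_RC G x : G @ x^'+ --> G x -> RC G x.
Proof.
move=> /cvgrPdist_lt H e e0.
have := H e e0; rewrite near_withinE => -[d /= d0 Hd].
exists d => // y xy yd; rewrite distrC; apply: Hd => //=.
rewrite ltr_norml; lra.
Qed.

Definition CT f x := forall e : R, 0 < e -> exists2 d : R, 0 < d &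
  forall y, `|y - x| < d -> `|f y - f x| < e.

Lemma CT_cvg f x : CT f x -> f @ x --> f x.
Proof.
move=> H; apply/cvgrPdist_lt => e e0.
have [d d0 Hd] := H e e0.
exists d => //= t /= xt.
rewrite distrC; apply: Hd; by rewrite distrC.
Qed.

Lemma cvg_CT f x : f @ x --> f x -> CT f x.
Proof.
move=> /cvgrPdist_lt H e e0.
have := H e e0 => -[d /= d0 Hd].
exists d => // y xy; rewrite distrC; apply: Hd => //=; by rewrite distrC.
Qed.

Lemma lip_cont f (K : R) : 0 <= K -> (forall x y, `|f x - f y| <= K * `|x - y|) -> continuous f.
Proof.
move=> K0 Hf x; apply: CT_cvg => e e0.
exists (e / (K + 1)); first by apply: divr_gt0 => //; lra.
move=> y hy; apply: (le_lt_trans (Hf y x)).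
have K1 : 0 < K + 1 by lra.
apply: (@le_lt_trans _ _ ((K+1) * `|y - x|)).
  by rewrite ler_wpM2r //; lra.
by rewrite mulrC -ltr_pdivlMr.
Qed.



Lemma sup_max (S : set R) m : S m -> (forall x, S x -> x <= m) -> sup S = m.
Proof.
move=> Sm Hm; apply/le_anti/andP; split.
  by apply: ge_sup; [exists m | exact: Hm].
by apply: ub_le_sup => //; exists m.
Qed.

Lemma Tu_eq v F y m x0 : 0 <= m -> v x0 <= y -> F x0 = m ->
  (forall x, v x <= y -> F x <= m) -> Tu v F y = m.
Proof.
move=> m0 vx0 Fx0 H; apply: sup_max; first by right; exists x0.
by move=> z [->|[x /= vx <-]] //; apply: H.
Qed.

Lemma Tu_eq0 v F y : (forall x, v x <= y -> F x <= 0) -> Tu v F y = 0.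
Proof.
move=> H; apply: sup_max; first by left.
by move=> z [->|[x /= vx <-]] //; apply: H.
Qed.

Lemma Tu_le v F y m : 0 <= m -> (forall x, v x <= y -> F x <= m) -> Tu v F y <= m.
Proof.
move=> m0 H; apply: ge_sup; first by exists 0; left.
by move=> z [->|[x /= vx <-]] //; apply: H.
Qed.

Lemma Tu_ge v F y B x : (forall x, F x <= B) -> v x <= y -> F x <= Tu v F y.
Proof.
move=> HB vx; apply: ub_le_sup; last by right; exists x.
exists (Num.max 0 B) => z [->|[w /= _ <-]]; first by rewrite le_max lexx.
by rewrite le_max HB orbT.
Qed.

Lemma Tu_ge0 v F y B : (forall x, F x <= B) -> 0 <= Tu v F y.
Proof.
move=> HB; apply: ub_le_sup; last by left.
exists (Num.max 0 B) => z [->|[w /= _ <-]]; first by rewrite le_max lexx.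
by rewrite le_max HB orbT.
Qed.

Lemma isM_bnd F : isM F -> (forall x, 0 <= F x) /\ (forall x, F x <= 1).
Proof.
move=> [Fh [_ [a [b [Ha Hb]]]]]; split => x.
  by rewrite -(Ha (Num.min x (a - 1))); [apply: Fh; rewrite ge_min lexx | rewrite gt_min; apply/orP; right; lra].
by rewrite -(Hb (Num.max x b)); [apply: Fh; rewrite le_max lexx | rewrite le_max lexx orbT].
Qed.

Lemma LC_RC G x : (exists2 d : R, 0 < d & forall y, x < y -> y < x + d -> G y = G x) -> RC G x.
Proof.
move=> [d d0 H] e e0; exists d => // y xy yd; by rewrite H // subrr normr0.
Qed.

Definition P (a b t : R) : R -> R := fun x => if x < a then 0 else if x < b then t else 1.

Lemma TuP v a b t : {homo v : x y / x <= y} -> a <= b -> 0 <= t <= 1 ->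
  Tu v (P a b t) = P (v a) (v b) t.
Proof.
move=> vh ab /andP[t0 t1]; apply: funext => y; rewrite {2}/P.
case: (ltP y (v a)) => ya.
  apply: Tu_eq0 => x vx; rewrite /P.
  have -> : x < a by rewrite ltNge; apply/negP => /vh; lra.
  by [].
case: (ltP y (v b)) => yb.
  apply: (@Tu_eq _ _ _ _ a) => //.
    rewrite /P ltxx.
    have -> // : a < b.
    by rewrite ltNge; apply/negP => /vh; lra.
  move=> x vx; rewrite /P.
  have -> : x < b by rewrite ltNge; apply/negP => /vh; lra.
  by case: ifP.
apply: (@Tu_eq _ _ _ _ b) => //.
  by rewrite /P ltxx; have -> : (b < a) = false by apply/negbTE; rewrite -leNgt.
move=> x vx; rewrite /P; case: ifP => _ //; case: ifP => _ //.
Qed.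

Lemma isM_P a b t : a <= b -> 0 <= t <= 1 -> isM (P a b t).
Proof.
move=> ab /andP[t0 t1]; split; last split.
- move=> x y xy; rewrite /P.
  case: (ltP x a) => xa; case: (ltP y a) => ya; case: (ltP x b) => xb; case: (ltP y b) => yb //; lra.
- move=> x; apply: RC_cvg; apply: LC_RC; rewrite /P.
  case: (ltP x a) => xa.
    exists (a - x); first lra.
    by move=> y xy ya; have -> : y < a by lra.
  case: (ltP x b) => xb.
    exists (b - x); first lra.
    move=> y xy yb; have -> : (y < a) = false by apply/negbTE; rewrite -leNgt; lra.
    by have -> : y < b by lra.
  exists 1 => // y xy _; have -> : (y < a) = false by apply/negbTE; rewrite -leNgt; lra.
  by have -> : (y < b) = false by apply/negbTE; rewrite -leNgt; lra.
- exists a, b; split => x; rewrite /P.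
    by move=> ->.
  move=> bx; have -> : (x < a) = false by apply/negbTE; rewrite -leNgt; lra.
  by have -> : (x < b) = false by apply/negbTE; rewrite -leNgt; lra.
Qed.

Lemma mono_lip f (K : R) : 0 <= K ->
  (forall x y, x <= y -> f x <= f y /\ f y - f x <= K * (y - x)) -> inFU f.
Proof.
move=> K0 H; split; first by move=> x y /H[].
apply: (@lip_cont _ K) => // x y.
case: (leP x y) => xy.
  have [h1 h2] := H _ _ xy.
  rewrite distrC (ger0_norm (_ : 0 <= f y - f x)); last lra.
  by rewrite distrC ger0_norm; lra.
have [h1 h2] := H _ _ (ltW xy).
rewrite (ger0_norm (_ : 0 <= f x - f y)); last lra.
by rewrite ger0_norm; lra.
Qed.

Definition cl (e x : R) : R := if x - e < 0 then 0 else if x - e < 1 then x - e else 1.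
Definition mx (c x : R) : R := if x < c then c else x.
Definition mn (c x : R) : R := if x < c then x else c.
Definition sq (x : R) : R := if x < 1/2 then 0 else 2 * x - 1.
Definition v1 (e x : R) : R := if x < e then x else if x < e + 1 then e else x - 1.
Definition aff (s c x : R) : R := c + s * x.

Lemma FU_cl e : inFU (cl e).
Proof.
apply: (@mono_lip _ 1) => // x y xy; rewrite /cl.
by case: (ltP (x - e) 0); case: (ltP (y - e) 0); case: (ltP (x - e) 1); case: (ltP (y - e) 1); lra.
Qed.

Lemma FU_mx c : inFU (mx c).
Proof.
apply: (@mono_lip _ 1) => // x y xy; rewrite /mx.
by case: (ltP x c); case: (ltP y c); lra.
Qed.

Lemma FU_mn c : inFU (mn c).
Proof.
apply: (@mono_lip _ 1) => // x y xy; rewrite /mn.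
by case: (ltP x c); case: (ltP y c); lra.
Qed.

Lemma FU_sq : inFU sq.
Proof.
apply: (@mono_lip _ 2) => // x y xy; rewrite /sq.
by case: (ltP x (1/2)); case: (ltP y (1/2)); lra.
Qed.

Lemma FU_v1 e : inFU (v1 e).
Proof.
apply: (@mono_lip _ 1) => // x y xy; rewrite /v1.
by case: (ltP x e); case: (ltP y e); case: (ltP x (e+1)); case: (ltP y (e+1)); lra.
Qed.

Lemma FU_aff s c : 0 <= s -> inFU (aff s c).
Proof.
move=> s0; apply: (@mono_lip _ s) => // x y xy; rewrite /aff; split.
  by rewrite lerD2l ler_wpM2l.
by rewrite mulrBr; lra.
Qed.

Lemma FU_cst c : inFU (fun _ : R => c).
Proof. by apply: (@mono_lip _ 0) => // x y xy; rewrite subrr mul0r. Qed.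

Lemma collapse F e : isM F -> (forall x, e <= x -> x < e + 1 -> F x = F e) ->
  Tu (cl e) F = P 0 1 (F e).
Proof.
move=> FM Fc; have [F0 F1] := isM_bnd FM.
have Fh := FM.1.
apply: funext => y; rewrite /P.
case: (ltP y 0) => y0.
  by apply: Tu_eq0 => x; rewrite /cl; case: (ltP (x - e) 0); case: (ltP (x - e) 1); lra.
case: (ltP y 1) => y1.
  apply: (@Tu_eq _ _ _ _ (e + y)) => //.
  - by rewrite /cl addrAC subrr add0r; case: (ltP y 0); case: (ltP y 1); lra.
  - by apply: Fc; lra.
  move=> x hx; rewrite -(Fc (e + y)); [|lra|lra].
  by apply: Fh; move: hx; rewrite /cl; case: (ltP (x - e) 0); case: (ltP (x - e) 1); lra.
have [_ [_ [a [b [_ Hb]]]]] := FM.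
apply: (@Tu_eq _ _ _ _ b) => //; last by apply: Hb.
by rewrite /cl; case: (ltP (b - e) 0); case: (ltP (b - e) 1); lra.
Qed.

Definition H (F : R -> R) (e x : R) : R :=
  if x < e then F x else if x < e + 1 then F e else F (x - 1).

Lemma H_homo F e : {homo F : x y / x <= y} -> {homo H F e : x y / x <= y}.
Proof.
move=> Fh x y xy; rewrite /H.
case: (ltP x e) => xe; case: (ltP y e) => ye; case: (ltP x (e+1)) => xe1;
  case: (ltP y (e+1)) => ye1; try lra; apply: Fh; lra.
Qed.

Lemma isM_H F e : isM F -> isM (H F e).
Proof.
move=> FM; have [Fh [Frc [a [b [Ha Hb]]]]] := FM.
split; first exact: H_homo.
split.
  move=> x; apply: RC_cvg.
  case: (ltP x e) => xe.
    have /cvg_RC Rx := Frc x.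
    move=> eps eps0; have [d d0 Hd] := Rx eps eps0.
    have hm : 0 < Num.min d (e - x) by rewrite lt_min d0 /=; lra.
    exists (Num.min d (e - x)) => //.
    have h1 : Num.min d (e - x) <= d by rewrite ge_min lexx.
    have h2 : Num.min d (e - x) <= e - x by rewrite ge_min lexx orbT.
    move=> y xy yde.
    rewrite /H; have -> : y < e by lra.
    by rewrite xe; apply: Hd => //; lra.
  case: (ltP x (e + 1)) => xe1.
    apply: LC_RC; exists (e + 1 - x); first lra.
    move=> y xy yd; rewrite /H.
    have -> : (y < e) = false by apply/negbTE; rewrite -leNgt; lra.
    have -> : y < e + 1 by lra.
    have -> : (x < e) = false by apply/negbTE; rewrite -leNgt; lra.
    by rewrite xe1.
  have /cvg_RC Rx := Frc (x - 1).
  move=> eps eps0; have [d d0 Hd] := Rx eps eps0.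
  exists d => // y xy yd; rewrite /H.
  have -> : (y < e) = false by apply/negbTE; rewrite -leNgt; lra.
  have -> : (y < e + 1) = false by apply/negbTE; rewrite -leNgt; lra.
  have -> : (x < e) = false by apply/negbTE; rewrite -leNgt; lra.
  have -> : (x < e + 1) = false by apply/negbTE; rewrite -leNgt; lra.
  by apply: Hd; lra.
exists (Num.min a e), (Num.max b e + 1); split => x.
  rewrite lt_min => /andP[xa xe]; by rewrite /H xe Ha.
have hb : b <= Num.max b e by rewrite le_max lexx.
have he : e <= Num.max b e by rewrite le_max lexx orbT.
rewrite /H => hx.
have -> : (x < e) = false by apply/negbTE; rewrite -leNgt; lra.
have -> : (x < e + 1) = false by apply/negbTE; rewrite -leNgt; lra.
by apply: Hb; lra.
Qed.

Lemma Tu_v1_H F e : isM F -> Tu (v1 e) (H F e) = F.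
Proof.
move=> FM; have [F0 F1] := isM_bnd FM; have Fh := FM.1.
have Hh := H_homo e Fh.
apply: funext => y.
case: (ltP y e) => ye.
  apply: (@Tu_eq _ _ _ _ y) => //.
  - by rewrite /v1 ye.
  - by rewrite /H ye.
  move=> x; rewrite /v1 /H; case: (ltP x e) => xe; case: (ltP x (e+1)) => xe1; try lra.
  by move=> xy; apply: Fh.
apply: (@Tu_eq _ _ _ _ (y + 1)) => //.
- rewrite /v1; have -> : (y + 1 < e) = false by apply/negbTE; rewrite -leNgt; lra.
  have -> : (y + 1 < e + 1) = false by apply/negbTE; rewrite -leNgt; lra.
  by rewrite addrK.
- rewrite /H; have -> : (y + 1 < e) = false by apply/negbTE; rewrite -leNgt; lra.
  have -> : (y + 1 < e + 1) = false by apply/negbTE; rewrite -leNgt; lra.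
  by rewrite addrK.
move=> x hx; have : H F e x <= H F e (y + 1).
  apply: Hh; move: hx; rewrite /v1; case: (ltP x e) => xe; case: (ltP x (e+1)) => xe1; lra.
rewrite /H; have -> : (y + 1 < e) = false by apply/negbTE; rewrite -leNgt; lra.
have -> : (y + 1 < e + 1) = false by apply/negbTE; rewrite -leNgt; lra.
by rewrite addrK.
Qed.

Lemma collapse_H F e : isM F -> Tu (cl e) (H F e) = P 0 1 (F e).
Proof.
move=> FM; rewrite collapse; first by rewrite /H ltxx ltrDl ltr01.
  exact: isM_H.
move=> x ex xe1; rewrite /H ltxx ltrDl ltr01 xe1.
by have -> : (x < e) = false by apply/negbTE; rewrite -leNgt.
Qed.

Definition E3 (t t' x : R) : R :=
  if x < 0 then 0 else if x < 1 then t else if x < 2 then t' else 1.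

Lemma isM_E3 t t' : 0 <= t -> t <= t' -> t' <= 1 -> isM (E3 t t').
Proof.
move=> t0 tt t1; split; last split.
- move=> x y xy; rewrite /E3.
  case: (ltP x 0) => ?; case: (ltP y 0) => ?; case: (ltP x 1) => ?; case: (ltP y 1) => ?;
  case: (ltP x 2) => ?; case: (ltP y 2) => ? //; lra.
- move=> x; apply: RC_cvg; apply: LC_RC; rewrite /E3.
  case: (ltP x 0) => x0.
    exists (- x); first lra.
    by move=> y xy ya; have -> : y < 0 by lra.
  case: (ltP x 1) => x1.
    exists (1 - x); first lra.
    move=> y xy yb; have -> : (y < 0) = false by apply/negbTE; rewrite -leNgt; lra.
    by have -> : y < 1 by lra.
  case: (ltP x 2) => x2.
    exists (2 - x); first lra.
    move=> y xy yb; have -> : (y < 0) = false by apply/negbTE; rewrite -leNgt; lra.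
    have -> : (y < 1) = false by apply/negbTE; rewrite -leNgt; lra.
    by have -> : y < 2 by lra.
  exists 1 => // y xy _; have -> : (y < 0) = false by apply/negbTE; rewrite -leNgt; lra.
  have -> : (y < 1) = false by apply/negbTE; rewrite -leNgt; lra.
  by have -> : (y < 2) = false by apply/negbTE; rewrite -leNgt; lra.
- exists 0, 2; split => x; rewrite /E3.
    by move=> ->.
  move=> bx; have -> : (x < 0) = false by apply/negbTE; rewrite -leNgt; lra.
  have -> : (x < 1) = false by apply/negbTE; rewrite -leNgt; lra.
  by have -> : (x < 2) = false by apply/negbTE; rewrite -leNgt; lra.
Qed.

Lemma collapse_E3a t t' : 0 <= t -> t <= t' -> t' <= 1 ->
  Tu (cl 0) (E3 t t') = P 0 1 t.
Proof.
move=> t0 tt t1; rewrite collapse; first by rewrite /E3 ltxx ltr01.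
  exact: isM_E3.
move=> x x0; rewrite add0r => x1; rewrite /E3 ltxx ltr01 x1.
by have -> : (x < 0) = false by apply/negbTE; rewrite -leNgt.
Qed.

Lemma collapse_E3b t t' : 0 <= t -> t <= t' -> t' <= 1 ->
  Tu (cl 1) (E3 t t') = P 0 1 t'.
Proof.
move=> t0 tt t1; rewrite collapse.
- by rewrite /E3 ltr10 ltxx (_ : (1:R) < 2) //; lra.
- exact: isM_E3.
move=> x x0 x1; rewrite /E3 ltr10 ltxx (_ : (1:R) < 2); last lra.
have -> : (x < 0) = false by apply/negbTE; rewrite -leNgt; lra.
have -> : (x < 1) = false by apply/negbTE; rewrite -leNgt; lra.
by have -> : x < 2 by lra.
Qed.

Lemma inf_between (T : set R) c : (forall y, c < y -> T y) -> (forall y, y < c -> ~ T y) ->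
  inf T = c.
Proof.
move=> H1 H2.
have lbT : lbound T c by move=> y Ty; rewrite leNgt; apply/negP => /H2.
have neT : T !=set0 by exists (c + 1); apply: H1; lra.
apply/le_anti/andP; split; last exact: lb_le_inf.
rewrite leNgt; apply/negP => ci.
have : T ((c + inf T) / 2) by apply: H1; lra.
move/(ge_inf (ex_intro _ c lbT)) => h; lra.
Qed.

Lemma Tu_max v y : inFU v -> (exists x0, v x0 <= y) ->
  (exists B, forall x, v x <= y -> x <= B) ->
  exists2 a, v a <= y & forall x, v x <= y -> x <= a.
Proof.
move=> [vh vc] [x0 hx0] [B HB].
set S := [set x | v x <= y].
have hs : has_sup S by split; [exists x0 | exists B => x; apply: HB].
exists (sup S); last by move=> x hx; apply: (sup_upper_bound hs).
rewrite leNgt; apply/negP => ya.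
have e0 : 0 < v (sup S) - y by lra.
have [d d0 Hd] := cvg_CT (vc (sup S)) e0.
have [w Sw hw] := sup_adherent d0 hs.
have wa : w <= sup S by apply: (sup_upper_bound hs).
have hw' : `|w - sup S| < d by rewrite ltr_norml; apply/andP; split; lra.
move: (Hd w hw'); rewrite ltr_norml => /andP[h1 h2]; rewrite /S /= in Sw; lra.
Qed.

Lemma isM_Tu (v F : R -> R) : inFU v -> isM F -> isM (Tu v F).
Proof.
move=> vFU FM; have [vh vc] := vFU; have [F0 F1] := isM_bnd FM.
have [Fh [Frc [a0 [b0 [Ha Hb]]]]] := FM.
have Gh : {homo Tu v F : x y / x <= y}.
  move=> y y' yy; apply: Tu_le; first exact: Tu_ge0 F1.
  move=> x vx; apply: (Tu_ge F1); lra.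
split => //; split; last first.
  exists (v a0), (v b0); split => y hy.
    apply: Tu_eq0 => x vx; rewrite Ha //; rewrite ltNge; apply/negP => /vh; lra.
  by apply: (@Tu_eq _ _ _ _ b0) => //; try (by apply: Hb); try (by move=> *; apply: F1); lra.
move=> y; apply: RC_cvg.
case: (leP (v b0) y) => yb.
  apply: LC_RC; exists 1 => // y' yy' _.
  have G1 : forall z, v b0 <= z -> Tu v F z = 1.
    by move=> z hz; apply: (@Tu_eq _ _ _ _ b0) => //; try (by apply: Hb); try (by move=> *; apply: F1).
  by rewrite !G1 //; lra.
have Sub : forall y', y' <= y -> forall x, v x <= y' -> x <= b0.
  move=> y' hy' x vx; rewrite leNgt; apply/negP => /ltW /vh; lra.
case: (pselect (exists x0, v x0 <= y)) => [ne|emp]; last first.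
  have lt1 : y < v (a0 - 1).
    rewrite ltNge; apply/negP => h; apply: emp; by exists (a0 - 1).
  apply: LC_RC; exists (v (a0 - 1) - y); first lra.
  move=> y' yy' yd.
  have -> : Tu v F y' = 0.
    apply: Tu_eq0 => x vx; rewrite Ha //.
    rewrite ltNge; apply/negP => h; have : v (a0 - 1) <= v x by apply: vh; lra.
    lra.
  apply/esym; apply: Tu_eq0 => x vx; exfalso; apply: emp; by exists x.
have [a va Ha'] := Tu_max vFU ne (ex_intro _ b0 (Sub y (lexx y))).
have Gy : Tu v F y = F a.
  apply: (@Tu_eq _ _ _ _ a) => // x /Ha' xa; exact: Fh.
move=> eps eps0.
have [d d0 Hd] := cvg_RC (Frc a) eps0.
have vw : y < v (a + d / 2).
  rewrite ltNge; apply/negP => /Ha'; lra.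
exists (v (a + d / 2) - y); first lra.
move=> y' yy' yd.
have g1 : Tu v F y <= Tu v F y' by apply: Gh; lra.
have g2 : Tu v F y' <= F (a + d / 2).
  apply: Tu_le => // x vx; apply: Fh; rewrite leNgt; apply/negP => h.
  have : v (a + d/2) <= v x by apply: vh; lra.
  lra.
have := Hd (a + d / 2) ltac:(lra) ltac:(lra); rewrite ltr_norml => /andP[_ h3].
rewrite ger0_norm; lra.
Qed.

Lemma qL_facts F p : isM F -> 0 < p <= 1 ->
  (forall x, x < qL F p -> F x < p) /\ (forall x, qL F p < x -> p <= F x).
Proof.
move=> FM /andP[p0 p1]; have [Fh [_ [a0 [b0 [Ha Hb]]]]] := FM.
set S := [set x | p <= F x].
have neS : S !=set0 by exists b0; rewrite /S /= Hb.
have lbS : has_lbound S.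
  exists a0 => x; rewrite /S /= => px; rewrite leNgt; apply/negP => /Ha; lra.
split => x hx.
  rewrite ltNge; apply/negP => px.
  have := ge_inf lbS px; rewrite -/(qL F p); lra.
have [w Sw wx] := inf_lt neS hx.
by apply: (le_trans Sw); apply: Fh; apply: ltW.
Qed.

Lemma qR_facts F p : isM F -> 0 <= p < 1 ->
  (forall x, x < qR F p -> F x <= p) /\ (forall x, qR F p < x -> p < F x).
Proof.
move=> FM /andP[p0 p1]; have [Fh [_ [a0 [b0 [Ha Hb]]]]] := FM.
set S := [set x | p < F x].
have neS : S !=set0 by exists b0; rewrite /S /= Hb.
have lbS : has_lbound S.
  exists a0 => x; rewrite /S /= => px; rewrite leNgt; apply/negP => /Ha; lra.
split => x hx.
  rewrite leNgt; apply/negP => px.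
  have := ge_inf lbS px; rewrite -/(qR F p); lra.
have [w Sw wx] := inf_lt neS hx.
by apply: (lt_le_trans Sw); apply: Fh; apply: ltW.
Qed.

Lemma cont_right (v : R -> R) z y : continuous v -> v z < y -> exists2 x, z < x & v x <= y.
Proof.
move=> vc zy; have e0 : 0 < y - v z by lra.
have [d d0 Hd] := cvg_CT (vc z) e0.
exists (z + d / 2); first lra.
have : `|z + d / 2 - z| < d by rewrite addrAC subrr add0r ger0_norm; lra.
by move/Hd; rewrite ltr_norml => /andP[_ h]; lra.
Qed.

Lemma cont_left (v : R -> R) z y : continuous v -> y < v z -> exists2 x, x < z & y < v x.
Proof.
move=> vc zy; have e0 : 0 < v z - y by lra.
have [d d0 Hd] := cvg_CT (vc z) e0.
exists (z - d / 2); first lra.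
have : `|z - d / 2 - z| < d by rewrite addrAC subrr add0r normrN ger0_norm; lra.
by move/Hd; rewrite ltr_norml => /andP[h _]; lra.
Qed.

Lemma qL_Tu (v F : R -> R) p : inFU v -> isM F -> 0 < p <= 1 -> qL (Tu v F) p = v (qL F p).
Proof.
move=> [vh vc] FM hp; have [F0 F1] := isM_bnd FM; have Fh := FM.1.
have [f1 f2] := qL_facts FM hp.
apply: inf_between => y hy.
  have [x zx vx] := cont_right vc hy.
  by rewrite /=; apply: (le_trans (f2 _ zx)); apply: (Tu_ge F1).
have [x' xz yx] := cont_left vc hy.
rewrite /= => h.
have : Tu v F y <= F x'.
  apply: Tu_le => // x vx; apply: Fh; rewrite leNgt; apply/negP => h'.
  have : v x' <= v x by apply: vh; lra.
  lra.
have := f1 _ xz; lra.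
Qed.

Lemma qR_Tu (v F : R -> R) p : inFU v -> isM F -> 0 <= p < 1 -> qR (Tu v F) p = v (qR F p).
Proof.
move=> [vh vc] FM hp; have [F0 F1] := isM_bnd FM; have Fh := FM.1.
have [f1 f2] := qR_facts FM hp.
apply: inf_between => y hy.
  have [x zx vx] := cont_right vc hy.
  by rewrite /=; apply: (lt_le_trans (f2 _ zx)); apply: (Tu_ge F1).
have [x' xz yx] := cont_left vc hy.
rewrite /= => h.
have : Tu v F y <= F x'.
  apply: Tu_le => // x vx; apply: Fh; rewrite leNgt; apply/negP => h'.
  have : v x' <= v x by apply: vh; lra.
  lra.
have := f1 _ xz; lra.
Qed.

Lemma mono_surj_cont (f : R -> R) : {homo f : x y / x <= y} -> (forall y, exists x, f x = y) ->
  continuous f.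
Proof.
move=> fh fs x; apply: CT_cvg => e e0.
have [a fa] := fs (f x - e / 2); have [b fb] := fs (f x + e / 2).
have ax : a < x by rewrite ltNge; apply/negP => /fh; lra.
have xb : x < b by rewrite ltNge; apply/negP => /fh; lra.
have h1 : Num.min (x - a) (b - x) <= x - a by rewrite ge_min lexx.
have h2 : Num.min (x - a) (b - x) <= b - x by rewrite ge_min lexx orbT.
have h0 : 0 < Num.min (x - a) (b - x) by rewrite lt_min; apply/andP; split; lra.
exists (Num.min (x - a) (b - x)) => // y; rewrite ltr_norml => /andP[y1 y2].
have : f a <= f y by apply: fh; lra.
have : f y <= f b by apply: fh; lra.
by move=> ? ?; rewrite ltr_norml; apply/andP; split; lra.
Qed.

Lemma anti_surj_cont (f : R -> R) : {homo f : x y / x <= y >-> y <= x} -> (forall y, exists x, f x = y) ->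
  continuous f.
Proof.
move=> fh fs x; apply: CT_cvg => e e0.
have [a fa] := fs (f x + e / 2); have [b fb] := fs (f x - e / 2).
have ax : a < x by rewrite ltNge; apply/negP => /fh; lra.
have xb : x < b by rewrite ltNge; apply/negP => /fh; lra.
have h1 : Num.min (x - a) (b - x) <= x - a by rewrite ge_min lexx.
have h2 : Num.min (x - a) (b - x) <= b - x by rewrite ge_min lexx orbT.
have h0 : 0 < Num.min (x - a) (b - x) by rewrite lt_min; apply/andP; split; lra.
exists (Num.min (x - a) (b - x)) => // y; rewrite ltr_norml => /andP[y1 y2].
have : f y <= f a by apply: fh; lra.
have : f b <= f y by apply: fh; lra.
by move=> ? ?; rewrite ltr_norml; apply/andP; split; lra.
Qed.

Lemma cont_comp3 (f g k : R -> R) : continuous f -> continuous g -> continuous k ->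
  continuous (fun x => k (g (f x))).
Proof.
move=> fc gc kc x.
have h1 := continuous_comp (gc (f x)) (kc (g (f x))).
exact: (continuous_comp (fc x) h1).
Qed.

Lemma bwd (rho : (R -> R) -> R) :
  (exists (h : R -> R) (rh : (R -> R) -> R),
    strictly_monotone h /\ continuous h /\ (forall y, exists x, h x = y) /\
    is_quantile rh /\ (forall F, isM F -> rho F = h (rh F))) -> comp_sets_equal rho.
Proof.
move=> [h [rh [hm [hc [hs [hq hrho]]]]]].
have [hinv hK] := choice hs.
have hinj : forall x, hinv (h x) = x.
  move=> x; set z := hinv (h x); have hz : h z = h x by rewrite hK.
  case: hm => hm; case: (ltgtP z x) => // zx; move: (hm _ _ zx); lra.
have EQ : forall v F, inFU v -> isM F -> rh (Tu v F) = v (rh F).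
  move=> v F vFU FM; have GM := isM_Tu vFU FM.
  case: hq => [[p [hp Hp]]|[p [hp Hp]]].
    by rewrite !Hp // qL_Tu.
  by rewrite !Hp // qR_Tu.
have hinvs : forall x, exists y, hinv y = x by move=> x; exists (h x).
have hinvc : continuous hinv.
  case: hm => hm.
    apply: mono_surj_cont => // x y xy; rewrite leNgt; apply/negP => /hm; rewrite !hK; lra.
  apply: anti_surj_cont => // x y xy; rewrite leNgt; apply/negP => /hm; rewrite !hK; lra.
have hw : forall x y, x <= y -> h x <= h y \/ h y <= h x.
  move=> x y xy; case: hm => hm; [left|right];
    by move: xy; rewrite le_eqVlt => /predU1P[->//|/hm/ltW].
have conjFU : forall u, inFU u -> inFU (fun x => hinv (u (h x))) /\ inFU (fun x => h (u (hinv x))).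
  move=> u [uh uc]; split; (split; last first).
  - exact: (cont_comp3 hc uc hinvc).
  - idtac.
    move=> x y xy; case: hm => hm.
      have : h x <= h y by move: xy; rewrite le_eqVlt => /predU1P[->//|/hm/ltW].
      move/uh => hu; rewrite leNgt; apply/negP => /hm; rewrite !hK; lra.
    have : h y <= h x by move: xy; rewrite le_eqVlt => /predU1P[->//|/hm/ltW].
    move/uh => hu; rewrite leNgt; apply/negP => /hm; rewrite !hK; lra.
  - exact: (cont_comp3 hinvc uc hc).
  move=> x y xy; case: hm => hm.
    have : hinv x <= hinv y by rewrite leNgt; apply/negP => /hm; rewrite !hK; lra.
    move/uh; rewrite le_eqVlt => /predU1P[->//|/hm/ltW //].
  have : hinv y <= hinv x by rewrite leNgt; apply/negP => /hm; rewrite !hK; lra.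
  move/uh; rewrite le_eqVlt => /predU1P[->//|/hm/ltW //].
split.
  move=> u uFU; exists (fun x => hinv (u (h x))); split; first by case: (conjFU u uFU).
  move=> F FM; have vFU := (conjFU u uFU).1.
  by rewrite !hrho //; [rewrite EQ // hK | exact: isM_Tu].
move=> v vFU; exists (fun x => h (v (hinv x))); split; first by case: (conjFU v vFU).
move=> F FM; rewrite !hrho //; last exact: isM_Tu.
by rewrite EQ // hinj.
Qed.


Section Fwd.
Variable rho : (R -> R) -> R.
Hypothesis C : comp_sets_equal rho.

Let g c := rho (P c c 1).

Lemma g_eqv v : inFU v -> exists2 u : R -> R, inFU u &
  (forall F, isM F -> rho (Tu v F) = u (rho F)) /\ (forall x, g (v x) = u (g x)).
Proof.
move=> vFU; have [u [uFU Hu]] := C.2 v vFU.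
exists u => //; split => // x.
rewrite /g -Hu; last by apply: isM_P => //; lra.
by rewrite TuP //; [case: vFU | lra].
Qed.

Lemma g_surj y : exists x, g x = y.
Proof.
have [v [vFU Hv]] := C.1 _ (FU_cst y).
exists (v 0); rewrite /g -(@TuP v 0 0 1) //; first by rewrite -Hv //; apply: isM_P => //; lra.
  by case: vFU.
by lra.
Qed.

Lemma g_inj a b : g a = g b -> a = b.
Proof.
have key : forall a b, a < b -> g a = g b -> forall a' b', a' < b' -> g a' = g b'.
  move=> {}a {}b ab gab a' b' ab'.
  pose s := (b' - a') / (b - a).
  have s0 : 0 <= s by apply: divr_ge0; lra.
  have [u uFU [_ Hu]] := g_eqv (FU_aff (a' - s * a) s0).
  have e1 : aff s (a' - s * a) a = a' by rewrite /aff; lra.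
  have e2 : aff s (a' - s * a) b = b'.
    have hs : s * (b - a) = b' - a'.
      rewrite /s divfK //; rewrite subr_eq0; apply/eqP => h; move: ab; rewrite h ltxx //.
    rewrite mulrBr in hs; rewrite /aff; lra.
  by rewrite -e1 -e2 !Hu gab.
move=> gab; case: (ltgtP a b) => // ab.
- have [x gx] := g_surj (g 0 + 1).
  case: (ltgtP x 0) => x0.
  + have := key _ _ ab gab _ _ x0; lra.
  + have := key _ _ ab gab _ _ x0; lra.
  + by move: gx; rewrite x0; lra.
- have [x gx] := g_surj (g 0 + 1).
  case: (ltgtP x 0) => x0.
  + have := key _ _ ab (esym gab) _ _ x0; lra.
  + have := key _ _ ab (esym gab) _ _ x0; lra.
  + by move: gx; rewrite x0; lra.
Qed.

Lemma g_A x c y : x < c -> c < y -> (g x < g c <-> g c < g y).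
Proof.
move=> xc cy.
have [u uFU [_ Hu]] := g_eqv (FU_mx c).
have [l lFU [_ Hl]] := g_eqv (FU_mn c).
have ux : g c = u (g x) by rewrite -Hu /mx xc.
have uy : g y = u (g y) by rewrite -Hu /mx; have -> : (y < c) = false by apply/negbTE; rewrite -leNgt; lra.
have lx : g x = l (g x) by rewrite -Hl /mn xc.
have ly : g c = l (g y) by rewrite -Hl /mn; have -> : (y < c) = false by apply/negbTE; rewrite -leNgt; lra.
have nxc : g x != g c by apply/eqP => /g_inj; lra.
have ncy : g c != g y by apply/eqP => /g_inj; lra.
have nxy : g x != g y by apply/eqP => /g_inj; lra.
have uh := uFU.1; have lh := lFU.1.
split => h.
  rewrite ltNge le_eqVlt negb_or eq_sym ncy /=; apply/negP => ycx.
  case: (ltgtP (g x) (g y)) => hxy.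
  - have := uh _ _ (ltW hxy); rewrite -ux -uy; lra.
  - have := lh _ _ (ltW hxy); rewrite -lx -ly; lra.
  - by move: nxy; rewrite hxy eqxx.
rewrite ltNge le_eqVlt negb_or eq_sym nxc /=; apply/negP => cx.
case: (ltgtP (g x) (g y)) => hxy.
- have := lh _ _ (ltW hxy); rewrite -lx -ly; lra.
- have := uh _ _ (ltW hxy); rewrite -ux -uy; lra.
- by move: nxy; rewrite hxy eqxx.
Qed.

Lemma g_B1 x x' c : x < c -> x' < c -> (g x < g c <-> g x' < g c).
Proof.
move=> xc xc'; rewrite (g_A xc (_ : c < c + 1)); last lra.
by rewrite (g_A xc' (_ : c < c + 1)); last lra.
Qed.

Lemma g_B2 y y' c : c < y -> c < y' -> (g c < g y <-> g c < g y').
Proof.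
move=> cy cy'; rewrite -(g_A (_ : c - 1 < c) cy); last lra.
by rewrite -(g_A (_ : c - 1 < c) cy'); last lra.
Qed.

Lemma g_pr x y : x < y -> (g x < g y <-> g 0 < g 1).
Proof.
move=> xy.
set L := Num.min x 0 - 1. set U := Num.max y 1 + 1.
have h1 : Num.min x 0 <= x by rewrite ge_min lexx.
have h2 : Num.min x 0 <= 0 by rewrite ge_min lexx orbT.
have h3 : y <= Num.max y 1 by rewrite le_max lexx.
have h4 : 1 <= Num.max y 1 by rewrite le_max lexx orbT.
rewrite (g_B2 xy (_ : x < U)); last by rewrite /U; lra.
rewrite (g_B1 (_ : x < U) (_ : L < U)); [|rewrite /U; lra|rewrite /L /U; lra].
rewrite (g_B2 (_ : 0 < 1) (_ : 0 < U)); [|lra|rewrite /U; lra].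
rewrite (g_B1 (_ : 0 < U) (_ : L < U)); [|rewrite /U; lra|rewrite /L /U; lra].
by [].
Qed.

Lemma g_sm : strictly_monotone g.
Proof.
case: (boolP (g 0 < g 1)) => h; [left|right] => x y xy.
  by apply/(g_pr xy).
have nxy : g x != g y by apply/eqP => /g_inj; lra.
rewrite lt_neqAle eq_sym nxy /= leNgt; apply/negP => /(g_pr xy) h'.
by rewrite h' in h.
Qed.

Lemma g_cont : continuous g.
Proof.
case: g_sm => hm.
  apply: mono_surj_cont; last exact: g_surj.
  by move=> x y; rewrite le_eqVlt => /predU1P[->//|/hm/ltW].
apply: anti_surj_cont; last exact: g_surj.
by move=> x y; rewrite le_eqVlt => /predU1P[->//|/hm/ltW].
Qed.

Let ginv y : R := proj1_sig (cid (g_surj y)).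
Let ginvK y : g (ginv y) = y := proj2_sig (cid (g_surj y)).
Let gK x : ginv (g x) = x.
Proof. by apply: g_inj; rewrite ginvK. Qed.

Let psi F := ginv (rho F).

Let psi_eqv v F : inFU v -> isM F -> psi (Tu v F) = v (psi F).
Proof.
move=> vFU FM; have [u uFU [Hu1 Hu2]] := g_eqv vFU.
by rewrite /psi Hu1 // -{1}(ginvK (rho F)) -Hu2 gK.
Qed.

Let rho_psi F : rho F = g (psi F).
Proof. by rewrite /psi ginvK. Qed.

Let s t := psi (P 0 1 t).

Let s01 t : 0 <= t <= 1 -> s t = 0 \/ s t = 1.
Proof.
move=> ht; have e : Tu sq (P 0 1 t) = P 0 1 t.
  rewrite TuP //; last by case: FU_sq.
  have -> : sq 0 = 0 by rewrite /sq; case: ltP; lra.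
  by have -> : sq 1 = 1 by rewrite /sq; case: ltP; lra.
have := psi_eqv FU_sq (isM_P (ler01 : (0:R) <= 1) ht); rewrite e -/(s t) /sq.
by case: (ltP (s t) (1/2)) => h1 h2; [left|right]; lra.
Qed.

Let s0 : s 0 = 1.
Proof.
rewrite /s (_ : P 0 1 0 = P 1 1 1); first by rewrite /psi gK.
apply: funext => x; rewrite /P; case: (ltP x 0); case: (ltP x 1) => //; lra.
Qed.

Let s1 : s 1 = 0.
Proof.
rewrite /s (_ : P 0 1 1 = P 0 0 1); first by rewrite /psi gK.
apply: funext => x; rewrite /P; case: (ltP x 0); case: (ltP x 1) => //; lra.
Qed.

Let smono t t' : 0 <= t -> t <= t' -> t' <= 1 -> s t = 0 -> s t' = 0.
Proof.
move=> t0 tt t1 st.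
have EM := isM_E3 t0 tt t1.
have h1 := psi_eqv (FU_cl 0) EM; rewrite collapse_E3a // -/(s t) st in h1.
have h2 := psi_eqv (FU_cl 1) EM; rewrite collapse_E3b // -/(s t') in h2.
move: h1 h2; rewrite /cl.
by case: (ltP (psi (E3 t t') - 0) 0); case: (ltP (psi (E3 t t') - 0) 1);
   case: (ltP (psi (E3 t t') - 1) 0); case: (ltP (psi (E3 t t') - 1) 1); lra.
Qed.

Let levels F e : isM F -> (psi F < e -> s (F e) = 0) /\ (e < psi F -> s (F e) = 1).
Proof.
move=> FM; have HM := isM_H e FM.
have h1 := psi_eqv (FU_v1 e) HM; rewrite Tu_v1_H // in h1.
have h2 := psi_eqv (FU_cl e) HM; rewrite collapse_H // -/(s (F e)) in h2.
rewrite h1 h2 /v1 /cl; set w := psi (H F e).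
by split; case: (ltP w e); case: (ltP w (e + 1)); case: (ltP (w - e) 0); case: (ltP (w - e) 1); lra.
Qed.

Lemma fwd_main : exists (h : R -> R) (rh : (R -> R) -> R),
    strictly_monotone h /\ continuous h /\ (forall y, exists x, h x = y) /\
    is_quantile rh /\ (forall F, isM F -> rho F = h (rh F)).
Proof.
pose T0 := [set t | (0 <= t <= 1) /\ s t = 0].
have neT : T0 !=set0 by exists 1; split; [by rewrite ler01 lexx | exact: s1].
have lbT : lbound T0 0 by move=> t [/andP[]].
have hlb : has_lbound T0 by exists 0.
set p := inf T0.
have p0 : 0 <= p := lb_le_inf neT lbT.
have p1 : p <= 1.
  apply: (ge_inf hlb); split; [by rewrite ler01 lexx | exact: s1].
have thr1 : forall t, 0 <= t <= 1 -> p < t -> s t = 0.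
  move=> t ht pt; have [t0 [/andP[t00 t01] st0] t0t] := inf_lt neT pt.
  move: ht => /andP[? ?]; apply: (smono t00 (ltW t0t)) => //.
have thr2 : forall t, 0 <= t <= 1 -> t < p -> s t = 1.
  move=> t ht tp; case: (s01 ht) => // st.
  have := ge_inf hlb (conj ht st); rewrite -/p; lra.
have hp : 0 <= p <= 1 by rewrite p0 p1.
exists g.
case: (s01 hp) => sp.
- have pp : 0 < p.
    rewrite lt_neqAle p0 andbT; apply/negP => /eqP p0'.
    by move: sp; rewrite -p0' s0; lra.
  exists (fun F => qL F p); split; first exact: g_sm.
  split; first exact: g_cont.
  split; first exact: g_surj.
  split; first by left; exists p; split => //; rewrite pp p1.
  move=> F FM; rewrite rho_psi; congr g.
  have [F0 F1] := isM_bnd FM.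
  have hp' : 0 < p <= 1 by rewrite pp p1.
  have [f1 f2] := qL_facts FM hp'.
  have [l1 l2] := levels ((psi F + qL F p) / 2) FM.
  have hF : 0 <= F ((psi F + qL F p) / 2) <= 1 by rewrite F0 F1.
  case: (ltgtP (psi F) (qL F p)) => // h.
  + have := l1 ltac:(lra); rewrite thr2 //; first lra.
    by apply: f1; lra.
  + have := l2 ltac:(lra).
    have : p <= F ((psi F + qL F p) / 2) by apply: f2; lra.
    rewrite le_eqVlt => /predU1P[<-|/(thr1 _ hF) ->]; lra.
- have pp : p < 1.
    rewrite lt_neqAle p1 andbT; apply/negP => /eqP p1'.
    by move: sp; rewrite p1' s1; lra.
  exists (fun F => qR F p); split; first exact: g_sm.
  split; first exact: g_cont.
  split; first exact: g_surj.
  split; first by right; exists p; split => //; rewrite pp p0.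
  move=> F FM; rewrite rho_psi; congr g.
  have [F0 F1] := isM_bnd FM.
  have hp' : 0 <= p < 1 by rewrite pp p0.
  have [f1 f2] := qR_facts FM hp'.
  have [l1 l2] := levels ((psi F + qR F p) / 2) FM.
  have hF : 0 <= F ((psi F + qR F p) / 2) <= 1 by rewrite F0 F1.
  case: (ltgtP (psi F) (qR F p)) => // h.
  + have := l1 ltac:(lra).
    have : F ((psi F + qR F p) / 2) <= p by apply: f1; lra.
    rewrite le_eqVlt => /predU1P[->|/(thr2 _ hF) ->]; lra.
  + have := l2 ltac:(lra); rewrite thr1 //; first lra.
    by apply: f2; lra.
Qed.

End Fwd.

End S.

Theorem proposition2 (R : realType) (rho : (R -> R) -> R) :
  comp_sets_equal rho <->
  exists (h : R -> R) (rh : (R -> R) -> R),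
    strictly_monotone h /\ continuous h /\ (forall y, exists x, h x = y) /\
    is_quantile rh /\ (forall F, isM F -> rho F = h (rh F)).
Proof.
split; first exact: fwd_main.
exact: bwd.
Qed.
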